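(* Let $G=G(n_1,n_2,p)$ where $1\ll n_1=\lambda n_2$ for a constant $0<\lambda\leq 1$, and $(n_1n_2)^{-\frac12}\ll p\ll (n_1n_2)^{-\frac12+o(1)}$. Then whp $f(G)=o(pn_1n_2)$.
   Context: $G(n_1,n_2,p)$ is the binomial random bipartite graph: each edge of $K_{n_1,n_2}$ is present independently with probability $p$. $f(G)$ denotes the number of faces of $G$ when embedded on an orientable surface of minimal genus. The notation $f\ll g$ means $f/g\to0$; ''whp'' means with probability tending to $1$ as $n_1\to\infty$. *)

(* Defs.v *)
From HB Require Import structures.
From mathcomp Require Import all_boot all_order all_algebra all_fingroup.
From mathcomp Require Import all_classical all_reals all_analysis.
Set Implicit Arguments. Unset Strict Implicit. Unset Printing Implicit Defensive.
Import Order.TTheory GRing.Theory Num.Theory.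

(* A spanning subgraph of K_{n1,n2} is given by its edge set
   E : {set 'I_n1 * 'I_n2}; vertices are 'I_n1 + 'I_n2. *)

(* Darts (oriented edges): (e, true) goes from the left end e.1 to the
   right end e.2, (e, false) the other way. *)
Definition dart (n1 n2 : nat) := ('I_n1 * 'I_n2 * bool)%type.

Definition dtail n1 n2 (d : dart n1 n2) : 'I_n1 + 'I_n2 :=
  if d.2 then inl d.1.1 else inr d.1.2.

Definition drev_fun n1 n2 (d : dart n1 n2) : dart n1 n2 := (d.1, ~~ d.2).

Lemma drev_funK n1 n2 : involutive (@drev_fun n1 n2).
Proof. by case=> e b; rewrite /drev_fun /= negbK. Qed.

Definition drev n1 n2 : {perm dart n1 n2} := perm (inv_inj (@drev_funK n1 n2)).

Definition in_graph n1 n2 (E : {set 'I_n1 * 'I_n2}) (d : dart n1 n2) : bool :=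
  d.1 \in E.

(* A rotation system of the graph E: a permutation s of the darts that fixes
   the darts not in E, maps each dart of E to a dart of E with the same tail,
   and acts as a single cycle on the darts at each vertex (the cyclic order
   of the darts around that vertex). *)
Definition rotation_system n1 n2 (E : {set 'I_n1 * 'I_n2})
    (s : {perm dart n1 n2}) : bool :=
  [forall d, (~~ in_graph E d ==> (s d == d)) &&
             (in_graph E d ==> in_graph E (s d) && (dtail (s d) == dtail d))]
  && [forall d, forall d',
        [&& in_graph E d, in_graph E d' & dtail d == dtail d'] ==>
        (d' \in porbit s d)].

(* Face-tracing permutation d |-> s (rev d); (drev * s) d = s (drev d). *)
Definition face_perm n1 n2 (s : {perm dart n1 n2}) : {perm dart n1 n2} :=
  drev n1 n2 * s.

Definition nfaces n1 n2 (E : {set 'I_n1 * 'I_n2}) (s : {perm dart n1 n2}) : nat :=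
  #|[set porbit (face_perm s) d | d in [pred d | in_graph E d]]|.

(* f(G): number of faces of a minimal-genus orientable embedding, i.e.
   (Heffter--Edmonds) the maximum number of faces over all rotation systems. *)
Definition min_genus_faces n1 n2 (E : {set 'I_n1 * 'I_n2}) : nat :=
  \max_(s : {perm dart n1 n2} | rotation_system E s) nfaces E s.

Definition bip_weight (R : realType) n1 n2 (p : R) (E : {set 'I_n1 * 'I_n2}) : R :=
  (p ^+ #|E| * (1 - p) ^+ (n1 * n2 - #|E|))%R.

Definition bip_prob (R : realType) n1 n2 (p : R)
    (P : pred {set 'I_n1 * 'I_n2}) : R :=
  (\sum_(E : {set 'I_n1 * 'I_n2} | P E) bip_weight p E)%R.

(* Main.v *)
Require Import Defs.
From HB Require Import structures.
From mathcomp Require Import all_boot all_order all_algebra all_fingroup.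
From mathcomp Require Import all_classical all_reals all_analysis.
From mathcomp Require Import zify ring lra.
Import Order.TTheory GRing.Theory Num.Theory numFieldNormedType.Exports.
Set Implicit Arguments. Unset Strict Implicit. Unset Printing Implicit Defensive.

Definition dhead n1 n2 (d : dart n1 n2) : 'I_n1 + 'I_n2 :=
  if d.2 then inr d.1.2 else inl d.1.1.

Definition edge_of n1 n2 (u v : 'I_n1 + 'I_n2) : option ('I_n1 * 'I_n2) :=
  match u, v with
  | inl a, inr b => Some (a, b)
  | inr b, inl a => Some (a, b)
  | _, _ => None end.

Definition dart_of n1 n2 (u v : 'I_n1 + 'I_n2) : option (dart n1 n2) :=
  match u, v with
  | inl a, inr b => Some ((a, b), true)
  | inr b, inl a => Some ((a, b), false)
  | _, _ => None end.

Definition shape n1 n2 m (t : m.-tuple ('I_n1 + 'I_n2)) : bool :=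
  [&& 2 < m, [forall k, forall k', (tnth t k == tnth t k') ==> (k == k')] &
      [forall k, edge_of (tnth t k) (tnth t (ordS k)) != None]].

Definition tedges n1 n2 m (t : m.-tuple ('I_n1 + 'I_n2)) : {set 'I_n1 * 'I_n2} :=
  [set e | [exists k, edge_of (tnth t k) (tnth t (ordS k)) == Some e]].

Definition cyc n1 n2 (E : {set 'I_n1 * 'I_n2}) m (t : m.-tuple ('I_n1 + 'I_n2)) :=
  shape t && (tedges t \subset E).

Definition startp n1 n2 m (t : m.-tuple ('I_n1 + 'I_n2)) (d : dart n1 n2) :=
  [exists k : 'I_m, (val k == 0) && (dart_of (tnth t k) (tnth t (ordS k)) == Some d)].

Definition osc n1 n2 L (E : {set 'I_n1 * 'I_n2}) (d : dart n1 n2) :=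
  [exists m : 'I_L.+1, exists t : m.-tuple ('I_n1 + 'I_n2), cyc E t && startp t d].

Definition Ccount n1 n2 L (E : {set 'I_n1 * 'I_n2}) :=
  \sum_(m < L.+1) #|[set t : m.-tuple ('I_n1 + 'I_n2) | cyc E t]|.

Lemma startp_uniq n1 n2 m (t : m.-tuple ('I_n1 + 'I_n2)) d d' :
  startp t d -> startp t d' -> d = d'.
Proof.
move=> /existsP[k /andP[/eqP k0 /eqP h]] /existsP[k' /andP[/eqP k0' /eqP h']].
have kk : k = k' by apply: val_inj; rewrite k0 k0'.
by move: h h'; rewrite kk => -> [].
Qed.

Lemma sum_startp n1 n2 m (t : m.-tuple ('I_n1 + 'I_n2)) :
  \sum_(d : dart n1 n2) (startp t d : nat) <= 1.
Proof.
have -> : \sum_(d : dart n1 n2) (startp t d : nat) = #|[set d | startp t d]|.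
  rewrite -sum1_card [RHS]big_mkcond /=; apply: eq_bigr => d _; rewrite inE.
  by case: startp.
apply/card_le1_eqP => x y; rewrite !inE => hx hy /=; exact: startp_uniq hy hx.
Qed.

Lemma osc_count n1 n2 L (E : {set 'I_n1 * 'I_n2}) :
  #|[set d : dart n1 n2 | osc L E d]| <= Ccount L E.
Proof.
rewrite -sum1_card.
apply: (@leq_trans (\sum_(d : dart n1 n2) \sum_(m < L.+1)
    \sum_(t : m.-tuple ('I_n1 + 'I_n2)) ((cyc E t && startp t d) : nat))).
  rewrite big_mkcond /=; apply: leq_sum => d _; rewrite inE.
  case: ifP => // /existsP[m /existsP[t ht]].
  rewrite (bigD1 m) //= (bigD1 t) //= ht.
  by rewrite -addnA leq_addr.
rewrite exchange_big /=; apply: leq_sum => m _; rewrite exchange_big /=.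
rewrite -sum1_card [X in _ <= X]big_mkcond /=; apply: leq_sum => t _; rewrite inE.
case: (cyc E t) => /=; last by rewrite big1.
exact: sum_startp.
Qed.

Lemma drevE n1 n2 (d : dart n1 n2) : drev n1 n2 d = (d.1, ~~ d.2).
Proof. by rewrite /drev permE. Qed.

Lemma face_permE n1 n2 (s : {perm dart n1 n2}) d :
  face_perm s d = s (drev n1 n2 d).
Proof. by rewrite /face_perm permM. Qed.

Lemma in_graph_drev n1 n2 E (d : dart n1 n2) : in_graph E (drev n1 n2 d) = in_graph E d.
Proof. by rewrite /in_graph drevE. Qed.

Lemma dtail_drev n1 n2 (d : dart n1 n2) : dtail (drev n1 n2 d) = dhead d.
Proof. by rewrite drevE /dtail /dhead; case: d => [[a b] []]. Qed.

Lemma dhead_drev n1 n2 (d : dart n1 n2) : dhead (drev n1 n2 d) = dtail d.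
Proof. by rewrite drevE /dtail /dhead; case: d => [[a b] []]. Qed.

Lemma dart_eq n1 n2 (x y : dart n1 n2) : dtail x = dtail y -> dhead x = dhead y -> x = y.
Proof.
by case: x => [[a b] []]; case: y => [[a' b'] []] //=; rewrite /dtail /dhead /=;
  move=> [->] [->].
Qed.

Lemma dtail_neq_dhead n1 n2 (x : dart n1 n2) : dtail x != dhead x.
Proof. by case: x => [[a b] []]. Qed.

Lemma edge_of_td n1 n2 (d : dart n1 n2) : edge_of (dtail d) (dhead d) = Some d.1.
Proof. by case: d => [[a b] []]. Qed.

Lemma dart_of_td n1 n2 (d : dart n1 n2) : dart_of (dtail d) (dhead d) = Some d.
Proof. by case: d => [[a b] []]. Qed.

Lemma rs_in n1 n2 E (s : {perm dart n1 n2}) d :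
  rotation_system E s -> in_graph E (s d) = in_graph E d.
Proof.
case/andP => /forallP H _; have /andP[h1 h2] := H d.
case hd: (in_graph E d).
  by move: h2; rewrite hd /= => /andP[->].
by move: h1; rewrite hd /= => /eqP ->; rewrite hd.
Qed.

Lemma rs_tail n1 n2 E (s : {perm dart n1 n2}) d :
  rotation_system E s -> in_graph E d -> dtail (s d) = dtail d.
Proof.
case/andP => /forallP H _ hd; have /andP[_ h2] := H d.
by move: h2; rewrite hd /= => /andP[_ /eqP].
Qed.

Lemma rs_orb n1 n2 E (s : {perm dart n1 n2}) d d' :
  rotation_system E s -> in_graph E d -> in_graph E d' -> dtail d = dtail d' ->
  d' \in porbit s d.
Proof.
case/andP => _ /forallP H hd hd' ht.
have := H d => /forallP/(_ d') /implyP; apply.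
by rewrite hd hd' ht eqxx.
Qed.

Lemma face_in n1 n2 E (s : {perm dart n1 n2}) d :
  rotation_system E s -> in_graph E (face_perm s d) = in_graph E d.
Proof. by move=> rs; rewrite face_permE (rs_in _ rs) in_graph_drev. Qed.

Lemma face_tail n1 n2 E (s : {perm dart n1 n2}) d :
  rotation_system E s -> in_graph E d -> dtail (face_perm s d) = dhead d.
Proof.
by move=> rs hd; rewrite face_permE (rs_tail rs) ?in_graph_drev // dtail_drev.
Qed.

Lemma faceX_in n1 n2 E (s : {perm dart n1 n2}) d i :
  rotation_system E s -> in_graph E ((face_perm s ^+ i)%g d) = in_graph E d.
Proof.
move=> rs; elim: i => [|i IH]; first by rewrite expg0 perm1.
by rewrite expgSr permM (face_in _ rs) IH.
Qed.

Lemma backtrack_uniq n1 n2 E (s : {perm dart n1 n2}) x y :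
  rotation_system E s -> in_graph E x -> in_graph E y ->
  face_perm s x = drev n1 n2 x -> face_perm s y = drev n1 n2 y ->
  dhead x = dhead y -> x = y.
Proof.
move=> rs hx hy fx fy hxy.
rewrite face_permE in fx.
have : drev n1 n2 y \in porbit s (drev n1 n2 x).
  apply: (rs_orb rs); rewrite ?in_graph_drev //.
  by rewrite !dtail_drev.
case/porbitP => i; rewrite permX_fix // => /perm_inj; done.
Qed.

Lemma short_face n1 n2 L E (s : {perm dart n1 n2}) a :
  rotation_system E s -> in_graph E a ->
  #|porbit (face_perm s) a| <= L ->
  (forall x, x \in porbit (face_perm s) a -> face_perm s x != drev n1 n2 x) ->
  exists2 d, d \in porbit (face_perm s) a & osc L E d.
Proof.
move=> rs ha hl nb.
set f := face_perm s in nb hl *.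
pose w i := (f ^+ i)%g a.
pose u i := dtail (w i).
have wS i : w i.+1 = f (w i) by rewrite /w expgSr permM.
have win i : in_graph E (w i) by rewrite /w (faceX_in _ _ rs).
have uS i : u i.+1 = dhead (w i) by rewrite /u wS (face_tail rs).
set l := #|porbit f a| in hl.
have wl : w l = a by rewrite /w permX iter_porbit.
have l0 : 0 < l by rewrite lt0n card_porbit_neq0.
pose P j := (0 < j) && [exists i : 'I_j, u i == u j].
have Pl : P l.
  rewrite /P l0 /=; apply/existsP; exists (Ordinal l0) => /=.
  by rewrite /u wl /w expg0 perm1.
have exP : exists j, P j by exists l.
case: (ex_minnP exP) => j /andP[j0 /existsP[[i ij] /= /eqP uij]] minj.
have jl : j <= l by apply: minj.
have dist i1 i2 : i1 < i2 -> i2 < j -> u i1 != u i2.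
  move=> h12 h2j; apply/negP => /eqP e.
  have : j <= i2.
    apply: minj; rewrite /P (leq_ltn_trans _ h12) //=.
    by apply/existsP; exists (Ordinal h12); rewrite /= e.
  by rewrite leqNgt h2j.
have m3 : 2 < j - i.
  case E1: (j - i) => [|[|[|k]]] //.
  - by move: ij; rewrite -subn_gt0 E1.
  - have ji : j = i.+1 by lia.
    move: uij; rewrite ji uS /u => /eqP.
    by rewrite (negbTE (dtail_neq_dhead _)).
  - have ji : j = i.+2 by lia.
    have : f (w i) = drev n1 n2 (w i).
      apply: dart_eq; first by rewrite (face_tail rs) ?win // dtail_drev.
      by rewrite dhead_drev -wS -uS -ji -uij.
    by move/eqP; rewrite (negbTE (nb _ (mem_porbit _ _ _))).
have mL : j - i < L.+1 by lia.
pose mO := Ordinal mL.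
pose t := [tuple u (i + k) | k < mO].
have tk (k : 'I_mO) : tnth t k = u (i + k) by rewrite tnth_mktuple.
have tS (k : 'I_mO) : tnth t (ordS k) = u (i + k).+1.
  rewrite tk /=.
  have hk2 : (k < j - i)%N by exact: (ltn_ord k).
  case: (ltnP k.+1 (j - i)) => hk.
    by rewrite modn_small // addnS.
  have he : k.+1 = j - i by apply/eqP; rewrite eqn_leq hk hk2.
  have he2 : (i + k).+1 = j by rewrite -addnS he subnKC // ltnW.
  by rewrite he modnn addn0 he2.
have hcyc : cyc E t.
  apply/andP; split.
    apply/and3P; split => //.
      apply/forallP => k; apply/forallP => k'; apply/implyP; rewrite !tk => /eqP e.
      apply/eqP/val_inj => /=.
      have hk : (k < j - i)%N := ltn_ord k.
      have hk' : (k' < j - i)%N := ltn_ord k'.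
      case: (ltngtP k k') => // hkk.
        by have := dist (i + k) (i + k') ltac:(lia) ltac:(lia); rewrite e eqxx.
      by have := dist (i + k') (i + k) ltac:(lia) ltac:(lia); rewrite e eqxx.
    by apply/forallP => k; rewrite tk tS uS /u edge_of_td.
  apply/fintype.subsetP => e; rewrite inE => /existsP[k]; rewrite tk tS uS /u edge_of_td.
  by move=> /eqP[<-]; exact: win.
have m0 : 0 < mO by rewrite /=; lia.
exists (w i); first exact: mem_porbit.
apply/existsP; exists mO; apply/existsP; exists t; rewrite hcyc /=.
apply/existsP; exists (Ordinal m0); apply/andP; split => //.
rewrite tS tk /= uS addn0 /u.
by rewrite dart_of_td.
Qed.

Lemma sum_sub (T : finType) (A B : {pred T}) (F : T -> nat) :
  {subset A <= B} -> \sum_(i in A) F i <= \sum_(i in B) F i.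
Proof.
move=> AB; rewrite [X in X <= _]big_mkcond [X in _ <= X]big_mkcond /=.
by apply: leq_sum => i _; case: ifP => // /AB ->.
Qed.

Lemma nfaces_bound n1 n2 L (E : {set 'I_n1 * 'I_n2}) s :
  rotation_system E s ->
  nfaces E s * L.+1 <= (n1 + n2 + 1 + Ccount L E) * L.+1 + 2 * #|E|.
Proof.
move=> rs; rewrite /nfaces.
set f := face_perm s.
set O := [set porbit f d | d in [pred d | in_graph E d]].
have inO A : A \in O -> exists2 a, in_graph E a & A = porbit f a.
  by case/imsetP => a ha ->; exists a.
have orb A x : A \in O -> x \in A -> A = porbit f x /\ in_graph E x.
  case/inO => a ha -> hx; split.
    by apply/esym/eqP; rewrite eq_porbit_mem.
  by case/porbitP: hx => i ->; rewrite (faceX_in _ _ rs).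
pose bt := fun A : {set dart n1 n2} => [exists x in A, f x == drev n1 n2 x].
set Oa := [set A in O | bt A].
set Ob := [set A in O | ~~ bt A && (#|A| <= L)].
set Oc := [set A in O | L < #|A|].
have sub : O \subset Oa :|: Ob :|: Oc.
  apply/fintype.subsetP => A hA; rewrite !inE hA /=.
  by case: (bt A); case: (leqP #|A| L).
have cO : #|O| <= #|Oa| + #|Ob| + #|Oc|.
  apply: (leq_trans (subset_leq_card sub)).
  apply: (leq_trans (leq_card_setU _ _).1); rewrite leq_add2r.
  exact: (leq_card_setU _ _).1.
have cA : #|Oa| <= n1 + n2 + 1.
  pose g := fun A : {set dart n1 n2} =>
    omap (@dhead n1 n2) [pick x in A | f x == drev n1 n2 x].
  have pk (A : {set dart n1 n2}) : bt A -> exists x,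
      [/\ [pick x in A | f x == drev n1 n2 x] = Some x, x \in A & f x = drev n1 n2 x].
    case/existsP => y /andP[yA fy]; case: pickP => [x /andP[xA /eqP fx] | h].
      by exists x.
    by have := h y; rewrite /= yA fy.
  have : #|Oa| <= #|{: option ('I_n1 + 'I_n2)}|.
    apply: (@leq_card_in _ _ g) => A B; rewrite !inE => /andP[hA bA] /andP[hB bB].
    have [x [px xA fx]] := pk A bA; have [y [py yB fy]] := pk B bB.
    rewrite /g px py /= => -[hxy].
    have [eA gx] := orb _ _ hA xA; have [eB gy] := orb _ _ hB yB.
    have exy : x = y by apply: (backtrack_uniq rs).
    by rewrite eA eB exy.
  by rewrite card_option card_sum !card_ord addn1.
have cB : #|Ob| <= Ccount L E.
  apply: leq_trans (osc_count L E).
  pose g := fun A : {set dart n1 n2} => [pick d in A | osc L E d].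
  have pk A : A \in Ob -> exists d, [/\ g A = Some d, d \in A & osc L E d].
    rewrite inE => /andP[hA /andP[nbA lA]].
    have [a ha eA] := inO A hA.
    have [d dA od] : exists2 d, d \in porbit f a & osc L E d.
      apply: short_face => //; first by rewrite -eA.
      move=> x; rewrite -eA => xA; apply/negP => /eqP fx.
      move/negP: nbA; apply; apply/existsP; exists x.
      by rewrite xA fx eqxx.
    rewrite -eA in dA.
    rewrite /g; case: pickP => [y /andP[yA oy] | h]; first by exists y.
    by have := h d; rewrite /= dA od.
  have -> : #|Ob| = #|g @: Ob|.
    apply/esym/card_in_imset => A B hA hB eg.
    have [d [gd dA _]] := pk A hA; have [d' [gd' dB _]] := pk B hB.
    move: eg; rewrite gd gd' => -[ed]; rewrite -ed in dB.
    have hA' : A \in O by move: hA; rewrite inE => /andP[].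
    have hB' : B \in O by move: hB; rewrite inE => /andP[].
    by rewrite (orb _ _ hA' dA).1 (orb _ _ hB' dB).1.
  have cS : #|[set Some d | d in [set d | osc L E d]]| = #|[set d | osc L E d]|.
    exact: card_imset (@Some_inj _).
  rewrite -cS; apply: subset_leq_card; apply/fintype.subsetP => z /imsetP[A hA ->].
  have [d [gd _ od]] := pk A hA; rewrite gd; apply: imset_f; by rewrite inE.
have cC : #|Oc| * L.+1 <= 2 * #|E|.
  have triv : finset.trivIset O.
    apply/finset.trivIsetP => A B hA hB nAB; rewrite disjoint_subset.
    apply/fintype.subsetP => x xA; rewrite inE; apply/negP => xB.
    move/eqP: nAB; apply.
    by rewrite (orb _ _ hA xA).1 (orb _ _ hB xB).1.
  have covO : #|finset.cover O| = \sum_(A in O) #|A|.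
    by apply/eqP; rewrite (finset.leq_card_cover O).2.
  have covD : finset.cover O \subset [set d : dart n1 n2 | in_graph E d].
    apply/bigcupsP => A hA; apply/fintype.subsetP => x xA; rewrite inE.
    exact: (orb _ _ hA xA).2.
  have cD : #|[set d : dart n1 n2 | in_graph E d]| = 2 * #|E|.
    have -> : [set d : dart n1 n2 | in_graph E d] = finset.setX E [set: bool].
      by apply/setP => -[e b]; rewrite !inE andbT.
    by rewrite finset.cardsX cardsT card_bool mulnC.
  rewrite -sum_nat_const.
  apply: (@leq_trans (\sum_(A in Oc) #|A|)).
    by apply: leq_sum => A; rewrite inE => /andP[_].
  apply: (@leq_trans (\sum_(A in O) #|A|)).
    by apply: sum_sub => A; rewrite inE => /andP[].
  by rewrite -covO -cD subset_leq_card.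
have h1 := leq_mul cA (leqnn L.+1).
have h2 := leq_mul cB (leqnn L.+1).
apply: (leq_trans (leq_mul cO (leqnn L.+1))).
rewrite !mulnDl; nia.
Qed.

Lemma mgf_bound n1 n2 L (E : {set 'I_n1 * 'I_n2}) :
  min_genus_faces E * L.+1 <= (n1 + n2 + 1 + Ccount L E) * L.+1 + 2 * #|E|.
Proof.
rewrite /min_genus_faces.
elim/big_ind: _ => //.
  move=> x y hx hy; rewrite maxnC /maxn; case: ifP => //.
exact: nfaces_bound.
Qed.
Local Open Scope ring_scope.

Lemma weight_prod (R : realType) n1 n2 (p : R) (E : {set 'I_n1 * 'I_n2}) :
  bip_weight p E = \prod_(e : 'I_n1 * 'I_n2) (if e \in E then p else 1 - p).
Proof.
rewrite /bip_weight (bigID (fun e => e \in E)) /=.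
rewrite [X in _ = X * _](eq_bigr (fun=> p)) => [|e ->] //.
rewrite [X in _ = _ * X](eq_bigr (fun=> 1 - p)) => [|e /negbTE ->] //.
rewrite !prodr_const.
congr (_ * _ ^+ _).
have := cardsC E; rewrite card_prod !card_ord => <-.
by rewrite addKn; apply: eq_card => i; rewrite !inE.
Qed.

Lemma sum_sets_prod (R : realType) (T : finType) (F G : T -> R) :
  \prod_(i : T) (F i + G i) =
  \sum_(J : {set T}) \prod_(i : T) (if i \in J then F i else G i).
Proof. exact: (@bigA_distr R 0 1 *%R +%R T F G). Qed.

Lemma sum_weight (R : realType) n1 n2 (p : R) :
  \sum_(E : {set 'I_n1 * 'I_n2}) bip_weight p E = 1.
Proof.
under eq_bigr do rewrite weight_prod.
rewrite -sum_sets_prod.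
by rewrite big1 // => e _; rewrite subrKC.
Qed.

Lemma sum_weight_sup (R : realType) n1 n2 (p : R) (S : {set 'I_n1 * 'I_n2}) :
  \sum_(E : {set 'I_n1 * 'I_n2} | S \subset E) bip_weight p E = p ^+ #|S|.
Proof.
rewrite big_mkcond /=.
under eq_bigr => E _.
  have -> : (if S \subset E then bip_weight p E else 0) =
    \prod_(e : 'I_n1 * 'I_n2) (if e \in E then p else (if e \in S then 0 else 1 - p)).
    case: ifP => [/fintype.subsetP SE | /negbT].
      rewrite weight_prod; apply: eq_bigr => e _.
      by case: ifP => // eE; case: ifP => // /SE; rewrite eE.
    case/fintype.subsetPn => e eS eE.
    by rewrite (bigD1 e) //= (negbTE eE) eS mul0r.
  over.
rewrite -sum_sets_prod.
rewrite (eq_bigr (fun e => if e \in S then p else 1)); last first.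
  by move=> e _; case: ifP => _; rewrite ?addr0 // subrKC.
by rewrite -big_mkcond /= prodr_const.
Qed.

Lemma ordSS_neq m (k : 'I_m) : (2 < m)%N -> ordS (ordS k) != k.
Proof.
move=> m2; apply/eqP => /(congr1 val) /=.
have hk : (k < m)%N := ltn_ord k.
case: (ltnP k.+1 m) => h1.
  rewrite (modn_small h1).
  case: (ltnP k.+2 m) => h2.
    by rewrite (modn_small h2); lia.
  have -> : k.+2 = m by lia.
  by rewrite modnn; lia.
have -> : k.+1 = m by lia.
by rewrite modnn modn_small; lia.
Qed.

Lemma edge_of_inj n1 n2 (u v u' v' : 'I_n1 + 'I_n2) :
  edge_of u v = edge_of u' v' -> edge_of u v != None ->
  (u = u' /\ v = v') \/ (u = v' /\ v = u').
Proof.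
case: u => a; case: v => b; case: u' => a'; case: v' => b' //= [-> ->] _;
  first [by left | by right].
Qed.

Lemma tedges_card n1 n2 m (t : m.-tuple ('I_n1 + 'I_n2)) :
  shape t -> (m <= #|tedges t|)%N.
Proof.
case/and3P => m2 /forallP inj /forallP ne.
have injt k k' : tnth t k = tnth t k' -> k = k'.
  by move=> e; have := inj k => /forallP/(_ k') /implyP/(_ (introT eqP e))/eqP.
pose g := fun k : 'I_m => edge_of (tnth t k) (tnth t (ordS k)).
have ginj : injective g.
  move=> k k' e.
  case: (edge_of_inj e (ne k)) => [[/injt -> _] // | [e1 e2]].
  have h1 := injt _ _ e1; have h2 := injt _ _ e2.
  have := ordSS_neq k m2; by rewrite h2 -h1 eqxx.
have cm : #|g @: [set: 'I_m]| = m by rewrite card_imset // cardsT card_ord.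
have cS : #|[set Some e | e in tedges t]| = #|tedges t| := card_imset _ (@Some_inj _).
rewrite -cS; apply: (@leq_trans #|g @: [set: 'I_m]|); first by rewrite cm.
apply: subset_leq_card; apply/fintype.subsetP => z /imsetP[k _ ->].
have : g k != None := ne k.
case E1 : (g k) => [e|] // _; apply: imset_f; rewrite inE.
by apply/existsP; exists k; rewrite -/(g k) E1.
Qed.

Lemma exp_card (R : realType) n1 n2 (p : R) :
  \sum_(E : {set 'I_n1 * 'I_n2}) bip_weight p E * #|E|%:R = p * (n1 * n2)%:R.
Proof.
have h (E : {set 'I_n1 * 'I_n2}) : #|E|%:R = \sum_(e : 'I_n1 * 'I_n2) ((e \in E)%:R : R).
  rewrite -sum1_card natr_sum big_mkcond /=; apply: eq_bigr => e _.
  by case: (e \in E).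
under eq_bigr => E _ do rewrite h big_distrr /=.
rewrite exchange_big /=.
under eq_bigr => e _.
  have -> : \sum_(E : {set 'I_n1 * 'I_n2}) bip_weight p E * (e \in E)%:R =
     \sum_(E : {set 'I_n1 * 'I_n2} | [set e] \subset E) bip_weight p E.
    rewrite [RHS]big_mkcond; apply: eq_bigr => E _; rewrite finset.sub1set.
    by case: (e \in E); rewrite ?mulr1 ?mulr0.
  rewrite sum_weight_sup cards1 expr1.
  over.
by rewrite sumr_const card_prod !card_ord mulr_natr.
Qed.

Lemma exp_cyc (R : realType) n1 n2 (p : R) m :
  0 <= p <= 1 ->
  \sum_(E : {set 'I_n1 * 'I_n2}) bip_weight p E *
     #|[set t : m.-tuple ('I_n1 + 'I_n2) | cyc E t]|%:R
  <= (n1 + n2)%:R ^+ m * p ^+ m.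
Proof.
case/andP => p0 p1.
have h (E : {set 'I_n1 * 'I_n2}) : #|[set t : m.-tuple ('I_n1 + 'I_n2) | cyc E t]|%:R
   = \sum_(t : m.-tuple ('I_n1 + 'I_n2)) ((cyc E t)%:R : R).
  rewrite -sum1_card natr_sum big_mkcond /=; apply: eq_bigr => t _.
  by rewrite inE; case: (cyc E t).
under eq_bigr => E _ do rewrite h big_distrr /=.
rewrite exchange_big /=.
apply: le_trans (_ : \sum_(t : m.-tuple ('I_n1 + 'I_n2)) p ^+ m <= _); last first.
  by rewrite sumr_const card_tuple card_sum !card_ord -[X in X <= _]mulr_natl natrX.
apply: ler_sum => t _.
case sh : (shape t).
  have -> : \sum_(E : {set 'I_n1 * 'I_n2}) bip_weight p E * (cyc E t)%:R =
     \sum_(E : {set 'I_n1 * 'I_n2} | tedges t \subset E) bip_weight p E.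
    rewrite [RHS]big_mkcond; apply: eq_bigr => E _; rewrite /cyc sh /=.
    by case: (_ \subset _); rewrite ?mulr1 ?mulr0.
  by rewrite sum_weight_sup; apply: ler_wiXn2l => //; apply: tedges_card.
rewrite big1; first by rewrite exprn_ge0.
by move=> E _; rewrite /cyc sh mulr0.
Qed.

Lemma weight_ge0 (R : realType) n1 n2 (p : R) (E : {set 'I_n1 * 'I_n2}) :
  0 <= p <= 1 -> 0 <= bip_weight p E.
Proof.
by case/andP => p0 p1; rewrite /bip_weight mulr_ge0 ?exprn_ge0 // subr_ge0.
Qed.

Lemma bad_bound (R : realType) n1 n2 (p δ : R) L :
  0 <= p <= 1 -> 0 < δ * p * (n1 * n2)%:R ->
  3 * (n1 + n2 + 1)%:R <= δ * p * (n1 * n2)%:R ->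
  1 - bip_prob p (fun E : {set 'I_n1 * 'I_n2} =>
                     (min_genus_faces E)%:R <= δ * p * (n1 * n2)%:R)
  <= 3 / (δ * p * (n1 * n2)%:R) *
     (\sum_(m < L.+1) (n1 + n2)%:R ^+ m * p ^+ m + 2 / L.+1%:R * (p * (n1 * n2)%:R)).
Proof.
move=> hp a0 hV.
set a := δ * p * _ in a0 hV *.
have hs := sum_weight n1 n2 p.
rewrite (bigID (fun E : {set 'I_n1 * 'I_n2} => (min_genus_faces E)%:R <= a)) /= in hs.
have -> : 1 - bip_prob p (fun E : {set 'I_n1 * 'I_n2} => (min_genus_faces E)%:R <= a)
    = \sum_(E : {set 'I_n1 * 'I_n2} | ~~ ((min_genus_faces E)%:R <= a)) bip_weight p E.
  by apply/eqP; rewrite subr_eq; apply/eqP; rewrite /bip_prob addrC hs.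
set l1 : R := L.+1%:R.
have l10 : 0 < l1 by rewrite /l1 ltr0Sn.
pose c (E : {set 'I_n1 * 'I_n2}) m := (#|[set t : m.-tuple ('I_n1 + 'I_n2) | cyc E t]|%:R : R).
pose Y (E : {set 'I_n1 * 'I_n2}) := 3 / a * (\sum_(m < L.+1) c E m + 2 / l1 * #|E|%:R).
apply: (@le_trans _ _ (\sum_(E : {set 'I_n1 * 'I_n2}) bip_weight p E * Y E)).
  rewrite big_mkcond /=; apply: ler_sum => E _.
  have w0 := weight_ge0 E hp.
  have C0 : 0 <= \sum_(m < L.+1) c E m by apply: sumr_ge0 => m _; exact: ler0n.
  case: ifP => hg; last first.
    apply: mulr_ge0 => //; apply: mulr_ge0; first by rewrite divr_ge0 // ltW.
    by rewrite addr_ge0 // mulr_ge0 // divr_ge0 // ltW.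
  rewrite -[X in X <= _]mulr1; apply: ler_wpM2l => //.
  have aF : a < (min_genus_faces E)%:R by rewrite ltNge.
  have hF := mgf_bound L E.
  rewrite /Ccount -(ler_nat R) !natrM natrD !natrM natrD natr_sum -/l1 in hF.
  rewrite -/(c E) in hF.
  set C := \sum_(m < L.+1) c E m in hF C0 *.
  set F := (min_genus_faces E)%:R in hF aF.
  set V := (n1 + n2 + 1)%:R in hF hV.
  set e := #|E|%:R in hF *.
  have e0 : 0 <= e by rewrite /e ler0n.
  have h1 : a * l1 <= F * l1 by rewrite ler_wpM2r // ?ltW.
  have h2 : 3 * V * l1 <= a * l1 by rewrite ler_wpM2r // ?ltW.
  have h3 : 0 <= C * l1 by rewrite mulr_ge0 // ltW.
  rewrite /Y.
  have -> : 3 / a * (C + 2 / l1 * e) = (3 * (C * l1 + 2 * e)) / (a * l1).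
    by field; apply/andP; split; rewrite gt_eqF.
  rewrite ler_pdivlMr; last by apply: mulr_gt0.
  rewrite mul1r.
  rewrite mulrDl in hF.
  lra.
have eqY : \sum_(E : {set 'I_n1 * 'I_n2}) bip_weight p E * Y E =
    3 / a * (\sum_(m < L.+1) \sum_(E : {set 'I_n1 * 'I_n2}) bip_weight p E * c E m
             + 2 / l1 * \sum_(E : {set 'I_n1 * 'I_n2}) bip_weight p E * #|E|%:R).
  rewrite [X in _ = _ * (X + _)]exchange_big /= mulrDr !big_distrr /= -big_split /=.
  apply: eq_bigr => E0 _; rewrite /Y -!big_distrr /=; ring.
move: eqY => ->; apply: ler_wpM2l; first by rewrite divr_ge0 // ltW.
apply: lerD.
  by apply: ler_sum => m _; exact: exp_cyc.
by rewrite exp_card.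
Qed.

Lemma step_k (R : realType) (lambda δ e p ε : R) (L n1 n2 : nat) :
  0 < lambda <= 1 -> n1%:R = lambda * n2%:R -> 0 <= p <= 1 -> 0 < δ -> 0 < e ->
  12 / (δ * e) < L.+1%:R ->
  1 + ((e / 2 / (3 * L.+1%:R * ((1 + lambda) / Num.sqrt lambda) ^+ L / δ))^-1) ^+ 4
    <= n1%:R ->
  1 + 3 * ((1 + lambda) / Num.sqrt lambda + 1) / δ <= p * Num.sqrt (n1 * n2)%:R ->
  p / ((n1 * n2)%:R `^ (- 2^-1 + ε)) < 1 ->
  `|ε| < 1 / (4 * L.+1%:R) ->
  1 - bip_prob p (fun E : {set 'I_n1 * 'I_n2} =>
                     (min_genus_faces E)%:R <= δ * p * (n1 * n2)%:R) < e.
Proof.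
move=> /andP[l0 l1le] hn hp δ0 e0 hL hn1 hs hpe heps.
have /andP[p0 p1] := hp.
set c := (1 + lambda) / Num.sqrt lambda in hn1 hs.
set l1 := L.+1%:R in hL hn1.
set K := 3 * l1 * c ^+ L / δ in hn1.
set η := e / 2 / K in hn1.
set N := (n1 * n2)%:R in hs hpe *.
set sN := Num.sqrt N in hs.
set s := p * sN in hs.
have l10 : 0 < l1 by rewrite /l1 ltr0Sn.
have sl : 0 < Num.sqrt lambda by rewrite sqrtr_gt0.
have sl1 : Num.sqrt lambda <= 1 by rewrite -sqrtr1 ler_sqrt // ler01 l1le.
have c1 : 1 <= c by rewrite /c ler_pdivlMr // mul1r; lra.
have c0 : 0 < c by lra.
have K0 : 0 < K by rewrite /K divr_gt0 // mulr_gt0 ?exprn_gt0 // mulr_gt0.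
have η0 : 0 < η by rewrite /η divr_gt0 // divr_gt0.
have n2ge : n1%:R <= n2%:R :> R.
  by rewrite hn -[X in _ <= X]mul1r ler_wpM2r // ler0n.
have X0 : 0 <= (η^-1) ^+ 4 by rewrite exprn_ge0 // invr_ge0 ltW.
have n1ge1 : 1 <= n1%:R :> R by lra.
have N_eq : N = n1%:R * n2%:R by rewrite /N natrM.
have Nge : n1%:R <= N.
  rewrite N_eq -[X in X <= _]mulr1 ler_wpM2l ?ler0n //; lra.
have Nge1 : 1 <= N by lra.
have N0 : 0 < N by lra.
have sN1 : 1 <= sN by rewrite -sqrtr1 ler_sqrt; lra.
have sN2 : sN ^+ 2 = N by rewrite sqr_sqrtr //; lra.
have hV : (n1 + n2)%:R = c * sN.
  rewrite /sN N_eq hn -[lambda * _ * _]mulrA sqrtrM ?ltW // -expr2 sqrtr_sqr ger0_norm ?ler0n //.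
  rewrite natrD hn /c; field; exact: lt0r_neq0.
have t0 : 0 <= 3 * (c + 1) / δ by rewrite divr_ge0 //; lra.
set t := 3 * (c + 1) / δ in hs t0.
have hds : 3 * (c + 1) <= δ * s.
  have h3 : t <= s by move: hs t0; clear; lra.
  by have := ler_wpM2r (ltW δ0) h3; rewrite /t divfK ?gt_eqF // [s * _]mulrC.
have s1 : 1 <= s by lra.
have p_pos : 0 < p.
  rewrite lt0r p0 andbT; apply/eqP => pz; move: s1; rewrite /s pz mul0r.
  by rewrite ler10.
have a_eq : δ * p * N = δ * s * sN by rewrite /s -[in LHS]sN2 expr2; ring.
have a0 : 0 < δ * p * N by rewrite a_eq !mulr_gt0 //; lra.
have hV3 : 3 * (n1 + n2 + 1)%:R <= δ * p * N.
  rewrite natrD hV a_eq.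
  have := ler_wpM2r (ltW (lt_le_trans ltr01 sN1)) hds.
  nra.
have hb := bad_bound L hp a0 hV3.
apply: (le_lt_trans hb).
rewrite mulrDr.
have hL' : 12 < l1 * (δ * e) by rewrite -ltr_pdivrMr // mulr_gt0.
have t2 : 3 / (δ * p * N) * (2 / l1 * (p * N)) < e / 2.
  have -> : 3 / (δ * p * N) * (2 / l1 * (p * N)) = 6 / (δ * l1).
    by field; rewrite !lt0r_neq0 //; [lra | lra].
  rewrite ltr_pdivrMr ?mulr_gt0 //.
  lra.
suff t1 : 3 / (δ * p * N) * \sum_(m < L.+1) (n1 + n2)%:R ^+ m * p ^+ m <= e / 2.
  by apply: (lt_le_trans (ler_ltD t1 t2)); lra.
have hcs : (n1 + n2)%:R * p = c * s by rewrite hV /s; ring.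
have cs1 : 1 <= c * s by rewrite mulr_ege1.
have hsum : \sum_(m < L.+1) (n1 + n2)%:R ^+ m * p ^+ m <= l1 * (c * s) ^+ L.
  apply: (@le_trans _ _ (\sum_(m < L.+1) (c * s) ^+ L)).
    apply: ler_sum => m _; rewrite -exprMn hcs; apply: ler_weXn2l => //.
    by rewrite -ltnS.
  by rewrite sumr_const card_ord -mulr_natl.
set x := s ^+ L / sN.
have x0 : 0 <= x by rewrite /x divr_ge0 // ?exprn_ge0; lra.
have hKx : 3 / (δ * p * N) * (l1 * (c * s) ^+ L) = K * x / s.
  rewrite a_eq /K /x exprMn; field.
  by rewrite !lt0r_neq0 //; lra.
have q0 : 0 < N `^ (- 2^-1 + ε) by rewrite powR_gt0.
have hpq : p < N `^ (- 2^-1 + ε) by rewrite ltr_pdivrMr // mul1r in hpe.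
have hq : N `^ (- 2^-1 + ε) * sN = N `^ ε.
  rewrite /sN -powR12_sqrt ?ltW // -powRD; last by apply/implyP => _; rewrite gt_eqF.
  by congr (_ `^ _); ring.
have sq : s <= N `^ ε.
  rewrite -hq /s ler_wpM2r // ?ltW //; lra.
have heL : ε * (2 * L)%:R <= 2^-1.
  have h1 : ε * (2 * L)%:R <= `|ε| * (2 * L)%:R by rewrite ler_wpM2r ?ler0n ?ler_norm.
  have h2 : `|ε| * (2 * L)%:R <= 1 / (4 * l1) * (2 * L)%:R.
    by rewrite ler_wpM2r ?ler0n // ltW.
  have h3 : 1 / (4 * l1) * (2 * L)%:R = (L%:R / l1) / 2.
    by rewrite natrM; field; rewrite lt0r_neq0.
  have h4 : L%:R / l1 <= 1 by rewrite ler_pdivrMr // mul1r /l1 ler_nat.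
  apply: (le_trans h1); apply: (le_trans h2); rewrite h3.
  move: h4; set D := L%:R / l1; lra.
have s2L : s ^+ (2 * L) <= sN.
  apply: (@le_trans _ _ ((N `^ ε) ^+ (2 * L))).
    by apply: lerXn2r => //; rewrite nnegrE ?powR_ge0 //; lra.
  rewrite -powR_mulrn ?powR_ge0 // -powRrM.
  rewrite /sN -powR12_sqrt; last by lra.
  exact: ler_powR.
have x2 : x ^+ 2 <= 1 / sN.
  rewrite /x expr_div_n -exprM sN2 mulnC.
  have -> : 1 / sN = sN / N by rewrite -sN2; field; rewrite gt_eqF //; lra.
  by rewrite ler_pM2r ?invr_gt0.
have sNη : (η^-1) ^+ 2 <= sN.
  have -> : (η^-1) ^+ 2 = Num.sqrt ((η^-1) ^+ 4).
    by rewrite (_ : 4 = 2 * 2)%N // exprM sqrtr_sqr ger0_norm // exprn_ge0 // invr_ge0 ltW.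
  rewrite /sN ler_sqrt; lra.
have x2η : x ^+ 2 <= η ^+ 2.
  apply: (le_trans x2).
  rewrite ler_pdivrMr; last by lra.
  have : η ^+ 2 * (η^-1) ^+ 2 = 1 by rewrite -exprMn divff ?expr1n // gt_eqF.
  have := ler_wpM2l (exprn_ge0 2 (ltW η0)) sNη.
  lra.
have xη : x <= η.
  by rewrite -(ler_pXn2r (n:=2)) // nnegrE ltW.
have ha0 : 0 <= 3 / (δ * p * N) by rewrite divr_ge0 // ltW.
apply: (le_trans (ler_wpM2l ha0 hsum)).
rewrite hKx.
have -> : e / 2 = K * η by rewrite /η; field; rewrite gt_eqF.
rewrite ler_pdivrMr; last by lra.
have h1 : K * x <= K * η by rewrite ler_wpM2l // ltW.
have h2 : K * η <= K * η * s.
  by rewrite -[X in X <= _]mulr1 ler_wpM2l // mulr_ge0 // ltW.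
lra.
Qed.

Unset Implicit Arguments.

Lemma bip_prob_le1 (R : realType) n1 n2 (p : R) (P : pred {set 'I_n1 * 'I_n2}) :
  0 <= p <= 1 -> 0 <= 1 - bip_prob p P.
Proof.
move=> hp; have hs := sum_weight n1 n2 p; rewrite (bigID P) /= in hs.
rewrite subr_ge0 -[X in _ <= X]hs /bip_prob lerDl.
by apply: sumr_ge0 => E _; exact: weight_ge0.
Qed.

Local Open Scope classical_set_scope.

Theorem corollary4p10 (R : realType) (lambda : R) (n1 n2 : nat -> nat)
    (p : nat -> R) :
  0 < lambda <= 1 ->
  (forall k, (n1 k)%:R = lambda * (n2 k)%:R) ->
  (fun k => (n1 k)%:R : R) @ \oo --> +oo ->
  (forall k, 0 <= p k <= 1) ->
  (fun k => p k * Num.sqrt ((n1 k * n2 k)%:R)) @ \oo --> +oo ->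
  (exists eps : nat -> R, eps @ \oo --> 0 /\
     (fun k => p k / (((n1 k * n2 k)%:R : R) `^ (- 2^-1 + eps k))) @ \oo --> 0) ->
  forall delta : R, 0 < delta ->
    (fun k => bip_prob (p k)
       (fun E : {set 'I_(n1 k) * 'I_(n2 k)} =>
          (min_genus_faces E)%:R <= delta * p k * (n1 k * n2 k)%:R))
      @ \oo --> (1 : R).
Proof.
move=> hl hn hn1 hp hs [eps [heps hpe]] δ δ0.
apply/cvgrPdist_lt => e e0.
pose L := Num.bound (12 / (δ * e)).
have hL : 12 / (δ * e) < L.+1%:R.
  apply: (lt_le_trans (archi_boundP _)); last by rewrite ler_nat.
  by rewrite divr_ge0 // mulr_ge0 // ltW.
have l4 : 0 < 1 / (4 * L.+1%:R) :> R by rewrite divr_gt0 // mulr_gt0 // ltr0Sn.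
near=> k.
have H1 : 1 + ((e / 2 / (3 * L.+1%:R * ((1 + lambda) / Num.sqrt lambda) ^+ L / δ))^-1) ^+ 4
    <= (n1 k)%:R.
  near: k; exact: ((cvgryPge _).1 hn1).
have H2 : 1 + 3 * ((1 + lambda) / Num.sqrt lambda + 1) / δ
    <= p k * Num.sqrt (n1 k * n2 k)%:R.
  near: k; exact: ((cvgryPge _).1 hs).
have H3 : p k / ((n1 k * n2 k)%:R `^ (- 2^-1 + eps k)) < 1.
  have : `|0 - p k / ((n1 k * n2 k)%:R `^ (- 2^-1 + eps k))| < 1.
    near: k; exact: ((cvgrPdist_lt _ _).1 hpe _ ltr01).
  by rewrite sub0r normrN => /ltr_normlW.
have H4 : `|eps k| < 1 / (4 * L.+1%:R).
  have : `|0 - eps k| < 1 / (4 * L.+1%:R).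
    near: k; exact: ((cvgrPdist_lt _ _).1 heps _ l4).
  by rewrite sub0r normrN.
have := step_k hl (hn k) (hp k) δ0 e0 hL H1 H2 H3 H4.
by rewrite ger0_norm //; apply: bip_prob_le1.
Unshelve. all: by end_near.
Qed.
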